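(* Let $\mathcal{P}$ be a grid polyomino, $I_{\mathcal{P}}$ its polyomino ideal and $J_{\mathcal{P}}$ its toric ideal. Then $I_{\mathcal{P}}=J_{\mathcal{P}}$.
   Context: A cell is $[a,a+(1,1)]$, $a\in\mathbb{N}^2$, with vertices $a,a+(1,0),a+(0,1),a+(1,1)$; a polyomino is a finite nonempty set of cells, any two joined by a sequence of cells in it with consecutive ones sharing an edge; $V(\mathcal{P})$ is the set of vertices of its cells; $S=\mathbb{K}[x_v\mid v\in V(\mathcal{P})]$, $\mathbb{K}$ a field. For $a\le b$ componentwise, $[a,b]=\{(p,q): a_1\le p\le b_1, a_2\le q\le b_2\}$; if $a_1<b_1$, $a_2<b_2$ it has diagonal corners $a,b$ and anti-diagonal corners $c=(a_1,b_2)$, $d=(b_1,a_2)$, and is an inner interval of $\mathcal{P}$ if all its cells lie in $\mathcal{P}$. $I_{\mathcal{P}}$ is generated by all $x_ax_b-x_cx_d$ for inner intervals $[a,b]$. Grid polyomino: let $m,n\ge1$, $r,s\ge1$, and for $i\in[r]$, $j\in[s]$ let $a_{ij},b_{ij}\in\mathbb{N}^2$ with $1<(a_{ij})_1<(b_{ij})_1<m$, $1<(a_{ij})_2<(b_{ij})_2<n$, such that (1) for each $i$, $(a_{i\ell})_1=(a_{ik})_1$ and $(b_{i\ell})_1=(b_{ik})_1$ for all $\ell,k\in[s]$; (2) for each $j$, $(a_{\ell j})_2=(a_{kj})_2$ and $(b_{\ell j})_2=(b_{kj})_2$ for all $\ell,k\in[r]$; (3) $(a_{i+1,j})_1=(b_{ij})_1+1$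 for $i\in[r-1]$ and $(a_{i,j+1})_2=(b_{ij})_2+1$ for $j\in[s-1]$. The grid polyomino $\mathcal{P}$ is the set of cells of $[(1,1),(m,n)]$ not contained in any $[a_{ij},b_{ij}]$; its holes are the sets of cells of the $[a_{ij},b_{ij}]$, with lower left corners $a_{ij}$. Toric ideal: $\mathcal{F}_{i,j}=\{(x,y)\in V(\mathcal{P}): x\le(a_{ij})_1,\ y\le(a_{ij})_2\}$. A horizontal edge interval is a set $\{(t,y):p\le t\le q\}$ with each $\{(t,y),(t+1,y)\}$, $p\le t<q$, an edge of a cell of $\mathcal{P}$; maximal if not strictly contained in another; vertical analogously. Each $a\in V(\mathcal{P})$ lies in a unique maximal horizontal edge interval $H(a)$ and maximal vertical one $V(a)$. With variables $h_H,v_V$ for maximal edge intervals and $w_{i,j}$, define $\varphi:S\to\mathbb{K}[h_H,v_V,w_{i,j}]$, $\varphi(x_a)=h_{H(a)}v_{V(a)}\prod_{(i,j):a\in\mathcal{F}_{i,j}}w_{i,j}$; $J_{\mathcal{P}}=\ker\varphi$. *)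

(* Defs.v *)
From HB Require Import structures.
From mathcomp Require Import all_boot all_order all_algebra.
From mathcomp Require Import mpoly.
Set Implicit Arguments. Unset Strict Implicit. Unset Printing Implicit Defensive.
Import GRing.Theory.

(* Lattice points are encoded in the box [0,M] x [0,N]; a cell is encoded by
   its lower-left corner (x,y), i.e. the cell [(x,y),(x+1,y+1)]. *)

Section Polyomino.
Variables (K : fieldType) (M N : nat) (cell : nat -> nat -> bool).

Definition pt := ('I_M.+1 * 'I_N.+1)%type.
Definition cx (v : pt) : nat := v.1.
Definition cy (v : pt) : nat := v.2.

Definition is_vertex (v : pt) : bool :=
  [exists c : pt, [&& cell (cx c) (cy c),
     cx c <= cx v <= (cx c).+1 & cy c <= cy v <= (cy c).+1]].

Definition vtx := {v : pt | is_vertex v}.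

Definition Sring := {mpoly K[#|{: vtx}|]}.
Definition xv (v : vtx) : Sring := 'X_(enum_rank v).

Definition inner (a b : pt) : bool :=
  [&& cx a < cx b, cy a < cy b &
   [forall c : pt, ((cx a <= cx c < cx b) && (cy a <= cy c < cy b))
                     ==> cell (cx c) (cy c)]].

Definition inner_binom (p : Sring) : Prop :=
  exists a b c d : vtx,
    [/\ inner (val a) (val b),
        cx (val c) = cx (val a) /\ cy (val c) = cy (val b),
        cx (val d) = cx (val b) /\ cy (val d) = cy (val a) &
        (p = xv a * xv b - xv c * xv d)%R].

Definition ideal_gen (R : comNzRingType) (G : R -> Prop) (p : R) : Prop :=
  exists s : seq (R * R), (forall q, q \in s -> G q.2) /\
                         (p = \sum_(q <- s) (q.1 * q.2))%R.

Definition polyomino_ideal (p : Sring) : Prop := ideal_gen inner_binom p.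

(* {(t,y),(t+1,y)} is an edge of a cell of P *)
Definition hedge (t y : nat) : bool := cell t y || ((0 < y) && cell t y.-1).
(* {(x,t),(x,t+1)} is an edge of a cell of P *)
Definition vedge (x t : nat) : bool := cell x t || ((0 < x) && cell x.-1 t).

Definition is_hint (H : {set pt}) : bool :=
  [exists p : 'I_M.+1, exists q : 'I_M.+1, exists y : 'I_N.+1,
    [&& p <= q,
        H == [set v : pt | (cy v == y) && (p <= cx v <= q)] &
        [forall t : 'I_M.+1, (p <= t < q) ==> hedge t y]]].

Definition is_vint (V : {set pt}) : bool :=
  [exists p : 'I_N.+1, exists q : 'I_N.+1, exists x : 'I_M.+1,
    [&& p <= q,
        V == [set v : pt | (cx v == x) && (p <= cy v <= q)] &
        [forall t : 'I_N.+1, (p <= t < q) ==> vedge x t]]].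

Definition is_maxh (H : {set pt}) : bool :=
  is_hint H && [forall H' : {set pt}, is_hint H' ==> ~~ (H \proper H')].
Definition is_maxv (V : {set pt}) : bool :=
  is_vint V && [forall V' : {set pt}, is_vint V' ==> ~~ (V \proper V')].

(* H(a), V(a): the (unique) maximal edge intervals containing a *)
Definition Hof (a : pt) : {set pt} :=
  odflt set0 [pick H : {set pt} | is_maxh H && (a \in H)].
Definition Vof (a : pt) : {set pt} :=
  odflt set0 [pick V : {set pt} | is_maxv V && (a \in V)].

(* the w-variables are indexed by a finite type I, and inF i a says a \in F_i *)
Variables (I : finType) (inF : I -> pt -> bool).

(* target variables: h_H (H a set of points), v_V, w_i *)
Definition tvar := ({set pt} + {set pt} + I)%type.
Definition Tring := {mpoly K[#|{: tvar}|]}.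
Definition yv (t : tvar) : Tring := 'X_(enum_rank t).

Definition phi_x (v : vtx) : Tring :=
  (yv (inl (inl (Hof (val v)))) * yv (inl (inr (Vof (val v)))) *
   \prod_(i | inF i (val v)) yv (inr i))%R.

Definition phi (p : Sring) : Tring :=
  mmap (fun c : K => (c%:MP)%R) (fun i => phi_x (enum_val i)) p.

Definition toric_ideal (p : Sring) : Prop := phi p = 0%R.

End Polyomino.

(* Grid polyomino data: holes [a i j, b i j], i < r, j < s (0-based indices). *)
Definition is_grid (m n r s : nat) (a b : 'I_r -> 'I_s -> (nat * nat)) : Prop :=
  [/\ (1 <= m /\ 1 <= n) /\ (1 <= r /\ 1 <= s),
      (forall i j, [/\ 1 < (a i j).1, (a i j).1 < (b i j).1 & (b i j).1 < m] /\
                   [/\ 1 < (a i j).2, (a i j).2 < (b i j).2 & (b i j).2 < n]),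
      (forall i l k, (a i l).1 = (a i k).1 /\ (b i l).1 = (b i k).1),
      (forall j l k, (a l j).2 = (a k j).2 /\ (b l j).2 = (b k j).2) &
      (forall (i i' : 'I_r) (j : 'I_s), val i' = (val i).+1 ->
          (a i' j).1 = (b i j).1 + 1) /\
      (forall (i : 'I_r) (j j' : 'I_s), val j' = (val j).+1 ->
          (a i j').2 = (b i j).2 + 1)].

Definition grid_cell (m n r s : nat) (a b : 'I_r -> 'I_s -> (nat * nat))
  (x y : nat) : bool :=
  [&& 1 <= x, x.+1 <= m, 1 <= y, y.+1 <= n &
      ~~ [exists i : 'I_r, exists j : 'I_s,
            [&& (a i j).1 <= x, x.+1 <= (b i j).1,
                (a i j).2 <= y & y.+1 <= (b i j).2]]].

Definition grid_inF (m n r s : nat) (a : 'I_r -> 'I_s -> (nat * nat))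
  (ij : 'I_r * 'I_s) (v : pt m n) : bool :=
  (cx v <= (a ij.1 ij.2).1) && (cy v <= (a ij.1 ij.2).2).

(* Main.v *)
Require Import Defs.
From mathcomp Require Import all_boot all_order all_algebra.
From mathcomp Require Import mpoly.
From mathcomp Require Import zify.
From Stdlib Require Import Classical ClassicalEpsilon.
Set Implicit Arguments. Unset Strict Implicit. Unset Printing Implicit Defensive.
Import GRing.Theory.

Section Intervals.
Variables (M N : nat) (cell : nat -> nat -> bool).
Local Notation pt := (pt M N).

Definition hseg (y p q : nat) : {set pt} :=
  [set v : pt | (cy v == y) && (p <= cx v <= q)].
Definition vseg (x p q : nat) : {set pt} :=
  [set v : pt | (cx v == x) && (p <= cy v <= q)].

Lemma cx_le (v : pt) : cx v <= M.
Proof. by rewrite /cx -ltnS ltn_ord. Qed.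
Lemma cy_le (v : pt) : cy v <= N.
Proof. by rewrite /cy -ltnS ltn_ord. Qed.

Lemma is_hint_intro (p q y : nat) : p <= q -> q <= M -> y <= N ->
  (forall t, p <= t < q -> hedge cell t y) -> is_hint cell (hseg y p q).
Proof.
move=> pq qM yN ed.
have pM : p < M.+1 by lia.
have qM' : q < M.+1 by lia.
have yN' : y < N.+1 by lia.
apply/existsP; exists (Ordinal pM); apply/existsP; exists (Ordinal qM').
apply/existsP; exists (Ordinal yN'); rewrite /= pq eqxx /=.
by apply/forallP => t; apply/implyP => /ed.
Qed.

Lemma is_hint_elim (H : {set pt}) : is_hint cell H -> exists p q y,
  [/\ p <= q, q <= M, y <= N, H = hseg y p q &
      forall t, p <= t < q -> hedge cell t y].
Proof.
case/existsP=> p /existsP [q /existsP [y /and3P [pq /eqP -> /forallP ed]]].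
exists p, q, y; split => //.
- by rewrite -ltnS ltn_ord.
- by rewrite -ltnS ltn_ord.
- move=> t tr; have tM : t < M.+1 by have := ltn_ord q; lia.
  by have := ed (Ordinal tM); rewrite /= tr.
Qed.

Lemma is_vint_intro (p q x : nat) : p <= q -> q <= N -> x <= M ->
  (forall t, p <= t < q -> vedge cell x t) -> is_vint cell (vseg x p q).
Proof.
move=> pq qN xM ed.
have pN : p < N.+1 by lia.
have qN' : q < N.+1 by lia.
have xM' : x < M.+1 by lia.
apply/existsP; exists (Ordinal pN); apply/existsP; exists (Ordinal qN').
apply/existsP; exists (Ordinal xM'); rewrite /= pq eqxx /=.
by apply/forallP => t; apply/implyP => /ed.
Qed.

Lemma is_vint_elim (H : {set pt}) : is_vint cell H -> exists p q x,
  [/\ p <= q, q <= N, x <= M, H = vseg x p q &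
      forall t, p <= t < q -> vedge cell x t].
Proof.
case/existsP=> p /existsP [q /existsP [x /and3P [pq /eqP -> /forallP ed]]].
exists p, q, x; split => //.
- by rewrite -ltnS ltn_ord.
- by rewrite -ltnS ltn_ord.
- move=> t tr; have tN : t < N.+1 by have := ltn_ord q; lia.
  by have := ed (Ordinal tN); rewrite /= tr.
Qed.

Lemma hint_union (H1 H2 : {set pt}) w : is_hint cell H1 -> is_hint cell H2 ->
  w \in H1 -> w \in H2 -> is_hint cell (H1 :|: H2).
Proof.
move=> /is_hint_elim [p1 [q1 [y1 [pq1 qM1 yN1 -> ed1]]]].
move=> /is_hint_elim [p2 [q2 [y2 [pq2 qM2 yN2 -> ed2]]]].
rewrite !inE => /andP [/eqP wy1 /andP [w1 w1']] /andP [/eqP wy2 /andP [w2 w2']].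
have -> : hseg y1 p1 q1 :|: hseg y2 p2 q2 = hseg y1 (minn p1 p2) (maxn q1 q2).
  apply/setP => v; rewrite !inE; apply/idP/idP.
  - by move=> h; lia.
  - by move=> h; lia.
apply: is_hint_intro; try lia.
move=> t tr.
case: (ltnP t (cx w)) => tw.
- case: (leqP p1 t) => pt1; first by apply: ed1; lia.
  by rewrite -wy1 wy2; apply: ed2; lia.
- case: (ltnP t q1) => tq1; first by apply: ed1; lia.
  by rewrite -wy1 wy2; apply: ed2; lia.
Qed.

Lemma vint_union (H1 H2 : {set pt}) w : is_vint cell H1 -> is_vint cell H2 ->
  w \in H1 -> w \in H2 -> is_vint cell (H1 :|: H2).
Proof.
move=> /is_vint_elim [p1 [q1 [y1 [pq1 qM1 yN1 -> ed1]]]].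
move=> /is_vint_elim [p2 [q2 [y2 [pq2 qM2 yN2 -> ed2]]]].
rewrite !inE => /andP [/eqP wy1 /andP [w1 w1']] /andP [/eqP wy2 /andP [w2 w2']].
have -> : vseg y1 p1 q1 :|: vseg y2 p2 q2 = vseg y1 (minn p1 p2) (maxn q1 q2).
  apply/setP => v; rewrite !inE; apply/idP/idP.
  - by move=> h; lia.
  - by move=> h; lia.
apply: is_vint_intro; try lia.
move=> t tr.
case: (ltnP t (cy w)) => tw.
- case: (leqP p1 t) => pt1; first by apply: ed1; lia.
  by rewrite -wy1 wy2; apply: ed2; lia.
- case: (ltnP t q1) => tq1; first by apply: ed1; lia.
  by rewrite -wy1 wy2; apply: ed2; lia.
Qed.

Lemma Hof_spec (w : pt) : is_maxh cell (Hof cell w) && (w \in Hof cell w).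
Proof.
rewrite /Hof; case: pickP => [H //|none]; exfalso.
have h0 : is_hint cell (hseg (cy w) (cx w) (cx w)) && (w \in hseg (cy w) (cx w) (cx w)).
  rewrite inE eqxx leqnn /= andbT; apply: is_hint_intro => //.
  - exact: cx_le.
  - exact: cy_le.
  - lia.
case: (@arg_maxnP _ (hseg (cy w) (cx w) (cx w)) (fun H => is_hint cell H && (w \in H)) (fun H => #|H|) h0).
move=> Hm /andP [hm wm] mx.
have := none Hm; rewrite wm andbT /is_maxh hm /=.
move/negbT/negP; apply; apply/forallP => H'; apply/implyP => h'.
apply/negP => pr.
have wH' : w \in H' by move/proper_sub: pr => /subsetP; apply.
have := mx H' (introT andP (conj h' wH')).
by move=> /= le; have := proper_card pr; rewrite ltnNge le.
Qed.

Lemma Vof_spec (w : pt) : is_maxv cell (Vof cell w) && (w \in Vof cell w).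
Proof.
rewrite /Vof; case: pickP => [H //|none]; exfalso.
have h0 : is_vint cell (vseg (cx w) (cy w) (cy w)) && (w \in vseg (cx w) (cy w) (cy w)).
  rewrite inE eqxx leqnn /= andbT; apply: is_vint_intro => //.
  - exact: cy_le.
  - exact: cx_le.
  - lia.
case: (@arg_maxnP _ (vseg (cx w) (cy w) (cy w)) (fun H => is_vint cell H && (w \in H)) (fun H => #|H|) h0).
move=> Hm /andP [hm wm] mx.
have := none Hm; rewrite wm andbT /is_maxv hm /=.
move/negbT/negP; apply; apply/forallP => H'; apply/implyP => h'.
apply/negP => pr.
have wH' : w \in H' by move/proper_sub: pr => /subsetP; apply.
have := mx H' (introT andP (conj h' wH')).
by move=> /= le; have := proper_card pr; rewrite ltnNge le.
Qed.

Lemma maxh_absorb (H1 H2 : {set pt}) w : is_maxh cell H1 -> is_hint cell H2 ->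
  w \in H1 -> w \in H2 -> H1 = H1 :|: H2.
Proof.
move=> /andP [h1 /forallP m1] h2 w1 w2.
have hu := hint_union h1 h2 w1 w2.
have := m1 (H1 :|: H2); rewrite hu /= properEneq subsetUl andbT negbK.
by move/eqP.
Qed.

Lemma maxv_absorb (H1 H2 : {set pt}) w : is_maxv cell H1 -> is_vint cell H2 ->
  w \in H1 -> w \in H2 -> H1 = H1 :|: H2.
Proof.
move=> /andP [h1 /forallP m1] h2 w1 w2.
have hu := vint_union h1 h2 w1 w2.
have := m1 (H1 :|: H2); rewrite hu /= properEneq subsetUl andbT negbK.
by move/eqP.
Qed.

Lemma maxh_uniq (H1 H2 : {set pt}) w : is_maxh cell H1 -> is_maxh cell H2 ->
  w \in H1 -> w \in H2 -> H1 = H2.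
Proof.
move=> m1 m2 w1 w2.
rewrite (maxh_absorb m1 (proj1 (andP m2)) w1 w2).
by rewrite setUC -(maxh_absorb m2 (proj1 (andP m1)) w2 w1).
Qed.

Lemma maxv_uniq (H1 H2 : {set pt}) w : is_maxv cell H1 -> is_maxv cell H2 ->
  w \in H1 -> w \in H2 -> H1 = H2.
Proof.
move=> m1 m2 w1 w2.
rewrite (maxv_absorb m1 (proj1 (andP m2)) w1 w2).
by rewrite setUC -(maxv_absorb m2 (proj1 (andP m1)) w2 w1).
Qed.

Lemma Hof_eqP (s t : pt) : Hof cell s = Hof cell t ->
  cy s = cy t /\ forall x, minn (cx s) (cx t) <= x < maxn (cx s) (cx t) -> hedge cell x (cy s).
Proof.
move=> e.
have /andP [/andP [hs _] ss] := Hof_spec s.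
have /andP [_ tt] := Hof_spec t.
rewrite -e in tt.
case/is_hint_elim: hs => p [q [y [pq qM yN E ed]]].
move: ss tt; rewrite E !inE => /andP [/eqP sy sr] /andP [/eqP ty tr].
split; first by rewrite sy ty.
move=> x xr; rewrite sy; apply: ed; lia.
Qed.

Lemma Hof_eqI (s t : pt) : cy s = cy t ->
  (forall x, minn (cx s) (cx t) <= x < maxn (cx s) (cx t) -> hedge cell x (cy s)) ->
  Hof cell s = Hof cell t.
Proof.
move=> e ed.
have /andP [ms ss] := Hof_spec s.
have /andP [mt tt] := Hof_spec t.
have hs : is_hint cell (hseg (cy s) (minn (cx s) (cx t)) (maxn (cx s) (cx t))).
  apply: is_hint_intro => //; [lia| |exact: cy_le].
  by have := cx_le s; have := cx_le t; lia.
have s' : s \in hseg (cy s) (minn (cx s) (cx t)) (maxn (cx s) (cx t)) by rewrite inE; lia.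
have t' : t \in hseg (cy s) (minn (cx s) (cx t)) (maxn (cx s) (cx t)) by rewrite inE; lia.
have E := maxh_absorb ms hs ss s'.
have tS : t \in Hof cell s by rewrite E inE t' orbT.
exact: maxh_uniq ms mt tS tt.
Qed.

Lemma Vof_eqP (s t : pt) : Vof cell s = Vof cell t ->
  cx s = cx t /\ forall y, minn (cy s) (cy t) <= y < maxn (cy s) (cy t) -> vedge cell (cx s) y.
Proof.
move=> e.
have /andP [/andP [hs _] ss] := Vof_spec s.
have /andP [_ tt] := Vof_spec t.
rewrite -e in tt.
case/is_vint_elim: hs => p [q [y [pq qM yN E ed]]].
move: ss tt; rewrite E !inE => /andP [/eqP sy sr] /andP [/eqP ty tr].
split; first by rewrite sy ty.
move=> x xr; rewrite sy; apply: ed; lia.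
Qed.

Lemma Vof_eqI (s t : pt) : cx s = cx t ->
  (forall y, minn (cy s) (cy t) <= y < maxn (cy s) (cy t) -> vedge cell (cx s) y) ->
  Vof cell s = Vof cell t.
Proof.
move=> e ed.
have /andP [ms ss] := Vof_spec s.
have /andP [mt tt] := Vof_spec t.
have hs : is_vint cell (vseg (cx s) (minn (cy s) (cy t)) (maxn (cy s) (cy t))).
  apply: is_vint_intro => //; [lia| |exact: cx_le].
  by have := cy_le s; have := cy_le t; lia.
have s' : s \in vseg (cx s) (minn (cy s) (cy t)) (maxn (cy s) (cy t)) by rewrite inE; lia.
have t' : t \in vseg (cx s) (minn (cy s) (cy t)) (maxn (cy s) (cy t)) by rewrite inE; lia.
have E := maxv_absorb ms hs ss s'.
have tS : t \in Vof cell s by rewrite E inE t' orbT.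
exact: maxv_uniq ms mt tS tt.
Qed.

End Intervals.

Section Algebra.
Local Open Scope ring_scope.
Variables (K : fieldType) (M N : nat) (cell : nat -> nat -> bool).
Local Notation pt := (pt M N).
Local Notation vtx := (vtx M N cell).
Local Notation S := (Sring K M N cell).

Lemma ideal0 : polyomino_ideal (0 : S).
Proof. by exists [::]; split => //; rewrite big_nil. Qed.

Lemma idealD (p q : S) : polyomino_ideal p -> polyomino_ideal q -> polyomino_ideal (p + q)%R.
Proof.
move=> [s1 [h1 ->]] [s2 [h2 ->]]; exists (s1 ++ s2); split; last by rewrite big_cat.
by move=> x; rewrite mem_cat => /orP [/h1|/h2].
Qed.

Lemma idealM (r p : S) : polyomino_ideal p -> polyomino_ideal (r * p)%R.
Proof.
move=> [s [h ->]]; exists [seq (r * x.1, x.2)%R | x <- s]; split.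
  by move=> q /mapP [x xs ->] /=; apply: h.
rewrite big_map mulr_sumr; apply: eq_bigr => x _ /=; by rewrite mulrA.
Qed.

Lemma idealN (p : S) : polyomino_ideal p -> polyomino_ideal (- p)%R.
Proof. by move=> h; rewrite -mulN1r; apply: idealM. Qed.

Lemma idealB (p q : S) : polyomino_ideal p -> polyomino_ideal q -> polyomino_ideal (p - q)%R.
Proof. by move=> hp hq; apply: idealD => //; apply: idealN. Qed.

Lemma idealG (g : S) : inner_binom g -> polyomino_ideal g.
Proof.
move=> h; exists [:: (1%R, g)]; split; first by move=> q; rewrite inE => /eqP -> /=.
by rewrite big_seq1 mul1r.
Qed.

Lemma ideal_sum (T : eqType) (s : seq T) (F : T -> S) :
  (forall x, x \in s -> polyomino_ideal (F x)) -> polyomino_ideal (\sum_(x <- s) F x)%R.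
Proof.
elim: s => [|x s IH] h; first by rewrite big_nil; apply: ideal0.
rewrite big_cons; apply: idealD; first by apply: h; rewrite inE eqxx.
by apply: IH => y ys; apply: h; rewrite inE ys orbT.
Qed.

End Algebra.

Section Phi.
Local Open Scope ring_scope.
Variables (K : fieldType) (M N : nat) (cell : nat -> nat -> bool).
Variables (I : finType) (inF : I -> pt M N -> bool).
Local Notation pt := (pt M N).
Local Notation vtx := (vtx M N cell).
Local Notation S := (Sring K M N cell).
Local Notation T := (Tring K M N I).
Local Notation tv := (tvar M N I).
Local Notation nv := #|{: vtx}|.
Local Notation nt := #|{: tv}|.

Definition ev (v : vtx) (t : tv) : nat :=
  ((t == inl (inl (Hof cell (val v)))) + (t == inl (inr (Vof cell (val v))))
   + (if t is inr i then inF i (val v) else false))%N.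

Definition e (v : vtx) : 'X_{1..nt} := [multinom ev v (enum_val k) | k < nt].

Definition E (mu : 'X_{1..nv}) : 'X_{1..nt} :=
  [multinom (\sum_(j < nv) mu j * ev (enum_val j) (enum_val k))%N | k < nt].

Lemma Ecoef mu t : E mu (enum_rank t) = (\sum_(j < nv) mu j * ev (enum_val j) t)%N.
Proof. by rewrite mnmE enum_rankK. Qed.

Lemma mpolyX_prodF (J : Type) (r : seq J) (P : pred J) (F : J -> 'X_{1..nt}) :
  \prod_(i <- r | P i) ('X_[F i] : T) = 'X_[(\sum_(i <- r | P i) F i)%MM].
Proof.
elim: r => [|i r IH]; first by rewrite !big_nil mpolyX0.
by rewrite !big_cons; case: (P i); rewrite ?mpolyXD IH.
Qed.

Lemma phi_x_e v : phi_x K inF v = 'X_[e v].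
Proof.
rewrite /phi_x /yv.
rewrite mpolyX_prodF -!mpolyXD; congr 'X_[_]; apply/mnmP => k.
rewrite !mnmDE mnm_sumE !mnm1E mnmE.
rewrite -{1 2}(enum_valK k) !(inj_eq enum_rank_inj) /ev !(eq_sym _ (enum_val k)).
congr (_ + _)%N.
under eq_bigr => i _ do rewrite mnm1E -{1}(enum_valK k) (inj_eq enum_rank_inj).
case: (enum_val k) => [x|i0].
  by rewrite big1.
rewrite big_mkcond (bigD1 i0) //= eqxx big1 ?addn0; first by case: (inF i0 _).
by move=> i ne; case: (inF i _) => //; apply/eqP; rewrite eqb0; apply: contra ne => /eqP [->].
Qed.

Lemma mmap1E (mu : 'X_{1..nv}) :
  mmap1 (fun i => phi_x K inF (enum_val i)) mu = 'X_[E mu].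
Proof.
rewrite /mmap1.
under eq_bigr => i _ do rewrite phi_x_e.
rewrite mprodXnE; congr 'X_[_]; apply/mnmP => k.
rewrite mnm_sumE mnmE; apply: eq_bigr => j _.
by rewrite mulmnE mnmE mulnC.
Qed.

Lemma phi_sum (p : S) :
  phi inF p = \sum_(m <- msupp p) (p@_m)%:MP * 'X_[E m].
Proof. by rewrite /phi /mmap; apply: eq_bigr => m _; rewrite mmap1E. Qed.

Lemma phi_coef (p : S) nu :
  (phi inF p)@_nu = \sum_(m <- msupp p) p@_m * (E m == nu)%:R.
Proof.
rewrite phi_sum raddf_sum; apply: eq_bigr => m _.
by rewrite /= mcoeffCM mcoeffX.
Qed.

Lemma phiE (p : S) : phi inF p = mmap (@mpolyC _ K) (fun i => phi_x K inF (enum_val i)) p.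
Proof. by []. Qed.

Lemma phiM (p q : S) : phi inF (p * q) = phi inF p * phi inF q.
Proof. by rewrite !phiE rmorphM. Qed.
Lemma phiB (p q : S) : phi inF (p - q) = phi inF p - phi inF q.
Proof. by rewrite !phiE rmorphB. Qed.
Lemma phi_sumr (J : Type) (r : seq J) (F : J -> S) :
  phi inF (\sum_(x <- r) F x) = \sum_(x <- r) phi inF (F x).
Proof. by rewrite !phiE rmorph_sum. Qed.

Lemma phi_xv (v : vtx) : phi inF (xv K v) = 'X_[e v].
Proof.
rewrite phiE /xv mmapX mmap1U enum_rankK; exact: phi_x_e.
Qed.

End Phi.

Section Generic.
Variables (K : fieldType) (M N : nat) (cell : nat -> nat -> bool).
Variables (I : finType) (inF : I -> pt M N -> bool).
Local Notation pt := (pt M N).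
Local Notation vtx := (vtx M N cell).
Local Notation S := (Sring K M N cell).
Local Notation T := (Tring K M N I).
Local Notation tv := (tvar M N I).
Local Notation nv := #|{: vtx}|.
Local Notation nt := #|{: tv}|.

Definition P (j : 'I_nv) : pt := val (enum_val j).
Definition X (j : 'I_nv) : nat := cx (P j).
Definition Y (j : 'I_nv) : nat := cy (P j).

Definition rect_all (x1 x2 y1 y2 : nat) : Prop :=
  forall x y, x1 <= x < x2 -> y1 <= y < y2 -> cell x y.

Definition sorted (mu : 'X_{1..nv}) : Prop :=
  forall a b : 'I_nv, 0 < mu a -> 0 < mu b -> X a < X b -> Y b < Y a ->
    ~ rect_all (X a) (X b) (Y b) (Y a).

Lemma inner_rect (a b : pt) : inner cell a b ->
  [/\ cx a < cx b, cy a < cy b & rect_all (cx a) (cx b) (cy a) (cy b)].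
Proof.
case/and3P => h1 h2 /forallP h3; split => // x y hx hy.
have xM : x < M.+1 by have := cx_le b; lia.
have yN : y < N.+1 by have := cy_le b; lia.
have := h3 (Ordinal xM, Ordinal yN); rewrite /cx /cy /= in hx hy *.
by rewrite hx hy.
Qed.

Lemma rect_inner (a b : pt) : cx a < cx b -> cy a < cy b ->
  rect_all (cx a) (cx b) (cy a) (cy b) -> inner cell a b.
Proof.
move=> h1 h2 h3; rewrite /inner h1 h2 /=; apply/forallP => c; apply/implyP.
by case/andP => hx hy; apply: h3.
Qed.

Hypothesis Hw : forall a b c d : pt, cx a < cx b -> cy a < cy b ->
  rect_all (cx a) (cx b) (cy a) (cy b) ->
  cx c = cx a -> cy c = cy b -> cx d = cx b -> cy d = cy a ->
  forall i, (inF i a + inF i b = inF i c + inF i d)%N.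

Lemma e_move (a b c d : vtx) : inner cell (val a) (val b) ->
  cx (val c) = cx (val a) -> cy (val c) = cy (val b) ->
  cx (val d) = cx (val b) -> cy (val d) = cy (val a) ->
  forall t, (ev inF a t + ev inF b t = ev inF c t + ev inF d t)%N.
Proof.
move=> /inner_rect [h1 h2 h3] c1 c2 d1 d2 t.
have Had : Hof cell (val a) = Hof cell (val d).
  apply: Hof_eqI => // x hx; rewrite /hedge (h3 x (cy (val a))) //; lia.
have Hbc : Hof cell (val b) = Hof cell (val c).
  apply: Hof_eqI => // x hx; rewrite /hedge; apply/orP; right.
  apply/andP; split; first lia.
  apply: h3; lia.
have Vac : Vof cell (val a) = Vof cell (val c).
  apply: Vof_eqI => // y hy; rewrite /vedge (h3 (cx (val a)) y) //; lia.
have Vbd : Vof cell (val b) = Vof cell (val d).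
  apply: Vof_eqI => // y hy; rewrite /vedge; apply/orP; right.
  apply/andP; split; first lia.
  apply: h3; lia.
rewrite /ev -Had -Hbc -Vac -Vbd.
case: t => [t|i].
  set b1 := (inl t == _); set b2 := (inl t == _); set b3 := (inl t == _); set b4 := (inl t == _).
  lia.
rewrite /= !addnn !add0n.
exact: Hw h1 h2 h3 c1 c2 d1 d2 i.
Qed.

Lemma E_addU (m : 'X_{1..nv}) (j : 'I_nv) (t : tv) :
  E inF (m + U_(j))%MM (enum_rank t) = (E inF m (enum_rank t) + ev inF (enum_val j) t)%N.
Proof.
rewrite !Ecoef.
under eq_bigr => i _ do rewrite mnmDE mnm1E mulnDl.
rewrite big_split /=; congr (_ + _)%N.
rewrite (bigD1 j) //= eqxx mul1n big1 ?addn0 // => i /negbTE ne.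
by rewrite eq_sym ne.
Qed.

Definition pot (m : 'X_{1..nv}) : nat := \sum_(j < nv) m j * (X j * Y j).

Lemma pot_addU m j : pot (m + U_(j))%MM = (pot m + X j * Y j)%N.
Proof.
rewrite /pot; under eq_bigr => i _ do rewrite mnmDE mnm1E mulnDl.
rewrite big_split /=; congr (_ + _)%N.
rewrite (bigD1 j) //= eqxx mul1n big1 ?addn0 // => i /negbTE ne.
by rewrite eq_sym ne.
Qed.

Lemma pot_le m : pot m <= mdeg m * (M * N).
Proof.
rewrite mdegE big_distrl /=; apply: leq_sum => j _.
apply: leq_mul => //; apply: leq_mul; [exact: cx_le | exact: cy_le].
Qed.

Lemma vtx_ge1 (v : vtx) : True. Proof. by []. Qed.

Lemma NF_exists (mu : 'X_{1..nv}) : exists mu', [/\ sorted mu', E inF mu' = E inF mu &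
  polyomino_ideal ('X_[mu] - 'X_[mu'] : S)%R].
Proof.
have [n] := ubnP (mdeg mu * (M * N) - pot mu); elim: n mu => // n IH mu hn.
case: (classic (sorted mu)) => [so|nso].
  by exists mu; split => //; rewrite GRing.subrr; apply: ideal0.
have [a [b [ha [hb [hab [hba hr]]]]]] : exists a b : 'I_nv, [/\ 0 < mu a, 0 < mu b,
    X a < X b, Y b < Y a & rect_all (X a) (X b) (Y b) (Y a)].
  apply: NNPP => hne; apply: nso => a b h1 h2 h3 h4 h5; apply: hne.
  by exists a, b; split.
pose c : pt := ((P a).1, (P b).2).
pose d : pt := ((P b).1, (P a).2).
have cx_c : cx c = X a by [].
have cy_c : cy c = Y b by [].
have cx_d : cx d = X b by [].
have cy_d : cy d = Y a by [].
have vc : is_vertex cell c.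
  apply/existsP; exists c; rewrite cx_c cy_c !leqnn leqnSn /=.
  rewrite leqnSn andbT; apply: hr; lia.
have vd : is_vertex cell d.
  have xM : (X b).-1 < M.+1 by have := cx_le (P b); rewrite /X; lia.
  have yN : (Y a).-1 < N.+1 by have := cy_le (P a); rewrite /Y; lia.
  apply/existsP; exists (Ordinal xM, Ordinal yN); rewrite /cx /cy /= -/(cx d) -/(cy d) cx_d cy_d.
  apply/and3P; split; first (apply: hr; lia); lia.
pose cV : vtx := exist _ c vc.
pose dV : vtx := exist _ d vd.
pose mu0 := (mu - U_(a) - U_(b))%MM.
have Emu : mu = (mu0 + U_(a) + U_(b))%MM.
  have nab : a != b by apply/eqP => e; move: hab; rewrite e; lia.
  apply/mnmP => j; rewrite !mnmDE !mnmBE !mnm1E.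
  case: (eqVneq a j) => [e1|n1]; case: (eqVneq b j) => [e2|n2] /=.
  - by move: nab; rewrite e1 e2 eqxx.
  - rewrite -e1; lia.
  - rewrite -e2; lia.
  - lia.
pose mu' := (mu0 + U_(enum_rank cV) + U_(enum_rank dV))%MM.
have inn : inner cell c d by apply: rect_inner; rewrite ?cx_c ?cx_d ?cy_c ?cy_d //.
have Emu' : E inF mu' = E inF mu.
  apply/mnmP => k; rewrite -(enum_valK k) Emu !E_addU !enum_rankK.
  have := @e_move cV dV (enum_val a) (enum_val b) inn erefl erefl erefl erefl (enum_val k).
  by move=> h; rewrite -addnA h addnA.
have idl : polyomino_ideal ('X_[mu] - 'X_[mu'] : S)%R.
  have -> : ('X_[mu] - 'X_[mu'] : S)%R =
      (- ('X_[mu0] * (xv K cV * xv K dV - xv K (enum_val a) * xv K (enum_val b))))%R.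
    rewrite /xv !enum_valK Emu /mu' !mpolyXD.
    by rewrite mulrBr opprB !mulrA.
  apply: idealN; apply: idealM; apply: idealG.
  by exists cV, dV, (enum_val a), (enum_val b); split.
have hn' : mdeg mu' * (M * N) - pot mu' < n.
  have dg : mdeg mu' = mdeg mu by rewrite Emu /mu' !mdegD !mdeg1.
  have pl := pot_le mu'.
  have pp : pot mu < pot mu'.
    rewrite Emu /mu' !pot_addU.
    have -> : X (enum_rank cV) = X a by rewrite /X /P enum_rankK.
    have -> : X (enum_rank dV) = X b by rewrite /X /P enum_rankK.
    have -> : Y (enum_rank cV) = Y b by rewrite /Y /P enum_rankK.
    have -> : Y (enum_rank dV) = Y a by rewrite /Y /P enum_rankK.
    nia.
  move: hn; rewrite -dg; lia.
case: (IH mu' hn') => mu'' [so' E'' id''].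
exists mu''; split => //; first by rewrite E'' Emu'.
have -> : ('X_[mu] - 'X_[mu''] : S)%R = (('X_[mu] - 'X_[mu']) + ('X_[mu'] - 'X_[mu'']))%R.
  by rewrite GRing.addrA GRing.subrK.
exact: idealD.
Qed.

Hypothesis Huniq : forall mu1 mu2 : 'X_{1..nv}, sorted mu1 -> sorted mu2 ->
  E inF mu1 = E inF mu2 -> mu1 = mu2.

Lemma phi_gen (g : S) : inner_binom g -> phi inF g = 0%R.
Proof.
case=> a [b [c [d [inn [c1 c2] [d1 d2] ->]]]].
rewrite phiB !phiM !phi_xv -!mpolyXD.
have -> : (e inF a + e inF b)%MM = (e inF c + e inF d)%MM.
  apply/mnmP => k; rewrite !mnmDE !mnmE.
  exact: e_move inn c1 c2 d1 d2 _.
by rewrite GRing.subrr.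
Qed.

Theorem generic_main (p : S) : polyomino_ideal p <-> toric_ideal inF p.
Proof.
split.
  case=> s [h ->]; rewrite /toric_ideal phi_sumr big_seq big1 // => q qs.
  by rewrite phiM (phi_gen (h q qs)) GRing.mulr0.
move=> hp.
have NFs : forall mu : 'X_{1..nv}, {mu' | [/\ sorted mu', E inF mu' = E inF mu &
    polyomino_ideal ('X_[mu] - 'X_[mu'] : S)%R]}.
  by move=> mu; apply: constructive_indefinite_description; apply: NF_exists.
pose F mu := proj1_sig (NFs mu).
have FP mu : [/\ sorted (F mu), E inF (F mu) = E inF mu &
    polyomino_ideal ('X_[mu] - 'X_[F mu] : S)%R] by rewrite /F; case: (NFs mu).
have q0 : (\sum_(m <- msupp p) p@_m *: ('X_[F m] : S) = 0)%R.
  apply/mpolyP => s; rewrite mcoeff0 raddf_sum /=.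
  under eq_bigr => m _ do rewrite mcoeffZ mcoeffX.
  case: (classic (sorted s)) => [so|nso].
    have eqv m : (F m == s) = (E inF m == E inF s).
      case: (FP m) => so' E' _.
      apply/eqP/eqP => [<-|h]; first by rewrite E'.
      by apply: Huniq => //; rewrite E' h.
    under eq_bigr => m _ do rewrite eqv.
    by rewrite -phi_coef hp mcoeff0.
  rewrite big1 // => m _.
  have : F m != s by apply/eqP => e; apply: nso; rewrite -e; case: (FP m).
  by move/negbTE => ->; rewrite GRing.mulr0.
have -> : p = (\sum_(m <- msupp p) (p@_m)%:MP * ('X_[m] - 'X_[F m]))%R.
  rewrite {1}(mpolyE p).
  under [in RHS]eq_bigr => m _ do rewrite GRing.mulrBr !mul_mpolyC.
  by rewrite GRing.sumrB q0 GRing.subr0.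
apply: ideal_sum => m _; apply: idealM.
by case: (FP m).
Qed.

End Generic.

Section Grid.
Variables (m n r s : nat) (ha hb : 'I_r -> 'I_s -> (nat * nat)).
Hypothesis G : @is_grid m n r s ha hb.
Local Notation cell := (@grid_cell m n r s ha hb).
Local Notation inF := (@grid_inF m n r s ha).
Local Notation pt := (pt m n).
Local Notation vtx := (vtx m n cell).
Local Notation nv := #|{: vtx}|.

Definition Ax i j := (ha i j).1.
Definition Bx i j := (hb i j).1.
Definition Ay i j := (ha i j).2.
Definition By i j := (hb i j).2.

Lemma bnds i j : [/\ 1 < Ax i j, Ax i j < Bx i j & Bx i j < m] /\
                 [/\ 1 < Ay i j, Ay i j < By i j & By i j < n].
Proof. by case: G => _ h _ _ _; apply: h. Qed.

Lemma consx i j j' : Ax i j = Ax i j' /\ Bx i j = Bx i j'.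
Proof. by case: G => _ _ h _ _; apply: h. Qed.
Lemma consy i i' j : Ay i j = Ay i' j /\ By i j = By i' j.
Proof. by case: G => _ _ _ h _; apply: h. Qed.

Lemma orderx_aux d : forall (i1 i2 : 'I_r) j, (i2 : nat) = (i1 + d.+1)%N -> Bx i1 j < Ax i2 j.
Proof.
elim: d => [|d IH] i1 i2 j e.
  case: G => _ _ _ _ [h _]; rewrite /Ax (h i1 i2 j) /Bx; try lia; simpl; lia.
have lt : (i1 + d.+1 < r)%N by have := ltn_ord i2; lia.
pose i' := Ordinal lt.
have h1 := IH i1 i' j erefl.
have [[_ h2 _] _] := bnds i' j.
case: G => _ _ _ _ [h _]; rewrite /Ax (h i' i2 j) /=; last by rewrite e; lia.
rewrite /Ax /Bx in h1 h2 *; lia.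
Qed.

Lemma orderx (i1 i2 : 'I_r) j j' : (i1 < i2)%N -> Bx i1 j < Ax i2 j'.
Proof.
move=> lt; have [d e] : exists d, (i2 : nat) = (i1 + d.+1)%N by exists (i2 - i1.+1)%N; lia.
have [_ ->] := consx i1 j j'; exact: orderx_aux e.
Qed.

Lemma monox (i1 i2 : 'I_r) j : (i1 <= i2)%N -> Ax i1 j <= Ax i2 j.
Proof.
rewrite leq_eqVlt => /orP [/eqP e|lt]; first by have -> : i1 = i2 by apply: val_inj.
have := orderx j j lt; have [[_ h _] _] := bnds i1 j; lia.
Qed.

Lemma noncell_hole x y : 1 <= x -> x.+1 <= m -> 1 <= y -> y.+1 <= n -> ~~ cell x y ->
  exists i j, [/\ Ax i j <= x, x < Bx i j, Ay i j <= y & y < By i j].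
Proof.
rewrite /grid_cell => -> -> -> -> /=; rewrite negbK => /existsP [i /existsP [j h]].
exists i, j; case/and4P: h => h1 h2 h3 h4; by split.
Qed.

Lemma hole_noncell i j x y : Ax i j <= x -> x < Bx i j -> Ay i j <= y -> y < By i j ->
  cell x y = false.
Proof.
move=> h1 h2 h3 h4; rewrite /grid_cell; apply/negbTE; rewrite !negb_and negbK.
apply/orP; right; apply/orP; right; apply/orP; right; apply/orP; right.
apply/existsP; exists i; apply/existsP; exists j; rewrite /Ax /Bx /Ay /By in h1 h2 h3 h4.
lia.
Qed.

Lemma cell_bnd x y : cell x y -> [/\ 1 <= x, x.+1 <= m, 1 <= y & y.+1 <= n].
Proof. by case/and5P. Qed.

Lemma vtx_bnd (v : vtx) : [/\ 1 <= cx (val v), cx (val v) <= m, 1 <= cy (val v) & cy (val v) <= n].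
Proof.
case: v => v /= /existsP [c /and3P [hc h1 h2]].
case/cell_bnd: hc => ? ? ? ?; split; lia.
Qed.

Lemma grid_Hw (a b c d : pt) : cx a < cx b -> cy a < cy b ->
  rect_all cell (cx a) (cx b) (cy a) (cy b) ->
  cx c = cx a -> cy c = cy b -> cx d = cx b -> cy d = cy a ->
  forall ij, (inF ij a + inF ij b = inF ij c + inF ij d)%N.
Proof.
move=> h1 h2 hr c1 c2 d1 d2 [i j]; rewrite /grid_inF /= c1 c2 d1 d2.
case: (boolP ((cx a <= Ax i j < cx b) && (cy a <= Ay i j < cy b))) => hin.
  exfalso; case/andP: hin => /andP [x1 x2] /andP [y1 y2].
  have := hr _ _ (introT andP (conj x1 x2)) (introT andP (conj y1 y2)).
  have [[_ q1 _] [_ q2 _]] := bnds i j.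
  by rewrite (@hole_noncell i j) // leqnn.
rewrite /Ax /Ay in hin; lia.
Qed.

End Grid.

Section Uniq.
Variables (m n r s : nat) (ha hb : 'I_r -> 'I_s -> (nat * nat)).
Hypothesis G : @is_grid m n r s ha hb.
Local Notation cell := (@grid_cell m n r s ha hb).
Local Notation inF := (@grid_inF m n r s ha).
Local Notation pt := (pt m n).
Local Notation vtx := (vtx m n cell).
Local Notation nv := #|{: vtx}|.
Local Notation tv := (tvar m n ('I_r * 'I_s)%type).
Local Notation X := (@X m n cell).
Local Notation Y := (@Y m n cell).
Local Notation P := (@P m n cell).
Local Notation sorted := (@sorted m n cell).
Local Notation E := (@E m n cell _ inF).
Local Notation Ax := (Ax ha). Local Notation Bx := (Bx hb).
Local Notation Ay := (Ay ha). Local Notation By := (By hb).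

Lemma cntH mu H0 : E mu (enum_rank (inl (inl H0) : tv)) =
  (\sum_(j < nv) mu j * (Hof cell (P j) == H0))%N.
Proof.
rewrite Ecoef; apply: eq_bigr => j _; rewrite /ev /= !addn0; congr (_ * nat_of_bool _)%N.
by apply/eqP/eqP => [[->]|->].
Qed.

Lemma cntV mu V0 : E mu (enum_rank (inl (inr V0) : tv)) =
  (\sum_(j < nv) mu j * (Vof cell (P j) == V0))%N.
Proof.
rewrite Ecoef; apply: eq_bigr => j _; rewrite /ev /= add0n addn0; congr (_ * nat_of_bool _)%N.
by apply/eqP/eqP => [[->]|->].
Qed.

Lemma cntW mu ij : E mu (enum_rank (inr ij : tv)) =
  (\sum_(j < nv) mu j * inF ij (P j))%N.
Proof. by rewrite Ecoef; apply: eq_bigr => j _; rewrite /ev /=. Qed.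

Lemma sum_pos_ex (mu : 'X_{1..nv}) (B : 'I_nv -> bool) :
  (0 < \sum_(j < nv) mu j * B j)%N -> exists j, (0 < mu j)%N /\ B j.
Proof.
move=> h; apply: NNPP => ne; move: h; rewrite big1 // => j _.
case: (posnP (mu j)) => [->//|pj]; case: (boolP (B j)) => bj; last by rewrite muln0.
by exfalso; apply: ne; exists j.
Qed.

Lemma sum_zero (mu : 'X_{1..nv}) (B : 'I_nv -> bool) :
  (forall j, (0 < mu j)%N -> B j = false) -> (\sum_(j < nv) mu j * B j = 0)%N.
Proof.
move=> h; rewrite big1 // => j _; case: (posnP (mu j)) => [->//|pj].
by rewrite h // muln0.
Qed.

Lemma sum_pos (mu : 'X_{1..nv}) (B : 'I_nv -> bool) j :
  (0 < mu j)%N -> B j -> (0 < \sum_(i < nv) mu i * B i)%N.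
Proof.
move=> pj bj; rewrite (bigD1 j) //= bj muln1; lia.
Qed.

Definition key (j : 'I_nv) : nat := (X j * n.+1 + Y j)%N.

Lemma Y_le j : (Y j <= n)%N. Proof. exact: cy_le. Qed.
Lemma X_le j : (X j <= m)%N. Proof. exact: cx_le. Qed.

Lemma key_lex j1 j2 : (key j1 <= key j2)%N ->
  (X j1 <= X j2)%N /\ (X j1 = X j2 -> Y j1 <= Y j2)%N.
Proof.
rewrite /key => h; have := Y_le j1; have := Y_le j2 => h1 h2.
split; last by move=> e; rewrite e in h; lia.
case: (leqP (X j1) (X j2)) => // lt; exfalso.
  have : (X j2 * n.+1 + n.+1 <= X j1 * n.+1)%N by rewrite -mulSnr leq_mul2r /=.

lia.
Qed.

Lemma pt_inj j1 j2 : X j1 = X j2 -> Y j1 = Y j2 -> j1 = j2.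
Proof.
rewrite /X /Y /P /cx /cy => ex ey; apply: enum_val_inj; apply: val_inj.
move: ex ey; case: (val (enum_val j1)) => a1 b1; case: (val (enum_val j2)) => a2 b2 /=.
by move=> /ord_inj -> /ord_inj ->.
Qed.

Lemma exists_lexmin (mu : 'X_{1..nv}) : mu != 0%MM ->
  exists j, (0 < mu j)%N /\ forall j', (0 < mu j')%N -> (key j <= key j')%N.
Proof.
move=> nz.
have [j0 p0] : exists j0, (0 < mu j0)%N.
  apply: NNPP => ne; move/eqP: nz; apply; apply/mnmP => j; rewrite mnm0E.
  by case: (posnP (mu j)) => // pj; exfalso; apply: ne; exists j.
case: (@arg_minnP _ j0 (fun j => 0 < mu j)%N key p0) => j pj mn.
by exists j; split.
Qed.

Definition lexmin (mu : 'X_{1..nv}) j :=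
  (0 < mu j)%N /\ forall j', (0 < mu j')%N -> (key j <= key j')%N.

Lemma vX j : (1 <= X j <= m)%N.
Proof. by have [a b _ _] := vtx_bnd (enum_val j); apply/andP; split. Qed.
Lemma vY j : (1 <= Y j <= n)%N.
Proof. by have [_ _ a b] := vtx_bnd (enum_val j); apply/andP; split. Qed.

Lemma lexX (mu1 mu2 : 'X_{1..nv})
  (hV : forall V0, (\sum_(j < nv) mu1 j * (Vof cell (P j) == V0) =
                    \sum_(j < nv) mu2 j * (Vof cell (P j) == V0))%N)
  j1 j2 : (0 < mu1 j1)%N -> lexmin mu2 j2 -> (X j2 <= X j1)%N.
Proof.
move=> p1 [p2 m2].
have := @sum_pos mu1 (fun j => Vof cell (P j) == Vof cell (P j1)) j1 p1 (eqxx _).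
rewrite hV => /sum_pos_ex [t [pt /eqP et]].
have [ex _] := Vof_eqP et.
have [h _] := key_lex (m2 t pt).
by move: h; rewrite {2}/X ex.
Qed.

Lemma lexY_contra (mu1 mu2 : 'X_{1..nv})
  (hV : forall V0, (\sum_(j < nv) mu1 j * (Vof cell (P j) == V0) =
                    \sum_(j < nv) mu2 j * (Vof cell (P j) == V0))%N)
  (hH : forall H0, (\sum_(j < nv) mu1 j * (Hof cell (P j) == H0) =
                    \sum_(j < nv) mu2 j * (Hof cell (P j) == H0))%N)
  (hW : forall ij, (\sum_(j < nv) mu1 j * inF ij (P j) =
                    \sum_(j < nv) mu2 j * inF ij (P j))%N)
  (so1 : sorted mu1) j1 j2 :
  lexmin mu1 j1 -> (0 < mu2 j2)%N -> X j1 = X j2 -> (Y j2 < Y j1)%N -> False.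
Proof.
move=> [p1 m1] p2 ex ey.
(* a point of mu1 in the vertical interval of j2 *)
have := @sum_pos mu2 (fun j => Vof cell (P j) == Vof cell (P j2)) j2 p2 (eqxx _).
rewrite -hV => /sum_pos_ex [t [pt /eqP et]].
have [ext edv] := Vof_eqP et.
have [_ kt] := key_lex (m1 t pt).
have Yt : (Y j1 <= Y t)%N by apply: kt; rewrite ex /X ext.
(* a point of mu1 in the horizontal interval of j2 *)
have := @sum_pos mu2 (fun j => Hof cell (P j) == Hof cell (P j2)) j2 p2 (eqxx _).
rewrite -hH => /sum_pos_ex [q [pq /eqP eq]].
have [eyq edh] := Hof_eqP eq.
have [kq1 kq2] := key_lex (m1 q pq).
have Yq : Y q = Y j2 by rewrite /Y eyq.
have Xq : (X j1 < X q)%N.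
  rewrite ltn_neqAle kq1 andbT; apply/eqP => e; have := kq2 e.
  by rewrite Yq; lia.
(* a non-cell in the rectangle *)
have nr := so1 j1 q p1 pq Xq (ltac:(rewrite Yq; exact: ey)).
have [cx' [cy' [hx hy hc]]] : exists x y, [/\ (X j1 <= x < X q)%N, (Y j2 <= y < Y j1)%N & ~~ cell x y].
  apply: NNPP => ne; apply: nr => x y hx' hy'; apply/negPn/negP => hc; apply: ne.
  by exists x, y; split => //; rewrite -Yq.
have vj1 := vX j1; have vq := vX q; have vyj1 := vY j1; have vyj2 := vY j2.
have vyt := vY t.
have [i [j [a1 a2 a3 a4]]] := @noncell_hole m n r s ha hb cx' cy'
  ltac:(lia) ltac:(lia) ltac:(lia) ltac:(lia) hc.
have [[bi1 bi2 bi3] [bi4 bi5 bi6]] := bnds G i j.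
(* the row of j2 is not inside hole row j *)
have yvA : (Y j2 <= Ay i j)%N.
  case: (leqP (Y j2) (Ay i j)) => // lt; exfalso.
  have := edh cx' ltac:(rewrite -/(X q) -/(X j2) -ex; lia).
  rewrite /hedge -/(Y q) Yq.
  rewrite (@hole_noncell m n r s ha hb i j cx' (Y j2)) //; try lia.
  rewrite (@hole_noncell m n r s ha hb i j cx' (Y j2).-1) //; try lia.
(* the column of j1 is not inside any hole column *)
have notint : forall k, (Ax k j < X j1 < Bx k j)%N -> False.
  move=> k /andP [k1 k2].
  have := edv (Ay i j) ltac:(rewrite -/(Y t) -/(Y j2); lia).
  rewrite /vedge ext -/(X j2) -ex.
  have [cy1 cy2] := consy G i k j.
  rewrite (@hole_noncell m n r s ha hb k j (X j1) (Ay i j)) //; try lia.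
  rewrite (@hole_noncell m n r s ha hb k j (X j1).-1 (Ay i j)) //; try lia.
have x0A : (X j1 <= Ax i j)%N.
  case: (leqP (X j1) (Ax i j)) => // lt; exfalso; apply: (notint i); lia.
(* the first hole column to the right of j1 *)
have [i' [hi' mi']] : exists i' : 'I_r, (X j1 <= Ax i' j)%N /\
    forall k : 'I_r, (X j1 <= Ax k j)%N -> (i' <= k)%N.
  case: (@arg_minnP _ i (fun k : 'I_r => X j1 <= Ax k j)%N (fun k => val k) x0A).
  by move=> i' h1 h2; exists i'; split.
have below : forall k : 'I_r, (k < i')%N -> (Bx k j <= X j1)%N.
  move=> k lt; case: (leqP (X j1) (Ax k j)) => h; first by have := mi' k h; lia.
  case: (leqP (Bx k j) (X j1)) => // h2; exfalso; apply: (notint k); lia.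
have [[bi1' bi2' bi3'] _] := bnds G i' j.
have [Ay' _] := consy G i i' j.
(* counting in the quadrant of hole (i', j) *)
have inF2 : inF (i', j) (P j2).
  by rewrite /grid_inF /= -/(X j2) -/(Y j2) -/(Ax i' j) -/(Ay i' j); lia.
have := @sum_pos mu2 (fun jj => inF (i', j) (P jj)) j2 p2 inF2.
rewrite -hW sum_zero //.
move=> sv psv; apply/negbTE/negP; rewrite /grid_inF /= -/(X sv) -/(Y sv) -/(Ax i' j) -/(Ay i' j).
move=> /andP [hs1 hs2].
have [ks1 ks2] := key_lex (m1 sv psv).
case: (eqVneq (X j1) (X sv)) => [e|ne].
  by have := ks2 e; lia.
have Xs : (X j1 < X sv)%N by lia.
apply: (so1 j1 sv p1 psv Xs ltac:(lia)).
move=> x y hx' hy'; apply/negPn/negP => hc'.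
have vsv := vY sv.
have [k [l [b1 b2 b3 b4]]] := @noncell_hole m n r s ha hb x y
  ltac:(lia) ltac:(lia) ltac:(lia) ltac:(lia) hc'.
have [c1 c2] := consx G k l j.
case: (ltnP k i') => hk.
  by have := below k hk; lia.
by have := monox G j hk; lia.
Qed.

Lemma split_U (mu : 'X_{1..nv}) j : (0 < mu j)%N -> mu = (mu - U_(j) + U_(j))%MM.
Proof.
move=> h; apply/mnmP => k; rewrite mnmDE mnmBE mnm1E.
case: (eqVneq j k) => [<-|_] /=; lia.
Qed.

Lemma sorted_sub (mu : 'X_{1..nv}) j : sorted mu -> sorted (mu - U_(j))%MM.
Proof.
move=> so a b ha' hb'; apply: so.
  by move: ha'; rewrite mnmBE; lia.
by move: hb'; rewrite mnmBE; lia.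
Qed.

Lemma zero_other (mu mu' : 'X_{1..nv}) :
  (forall H0, (\sum_(j < nv) mu j * (Hof cell (P j) == H0) =
               \sum_(j < nv) mu' j * (Hof cell (P j) == H0))%N) ->
  mu = 0%MM -> mu' = 0%MM.
Proof.
move=> hH z; apply/mnmP => j; rewrite mnm0E.
case: (posnP (mu' j)) => // pj; exfalso.
have := @sum_pos mu' (fun i => Hof cell (P i) == Hof cell (P j)) j pj (eqxx _).
by rewrite -hH sum_zero // => i; rewrite z mnm0E.
Qed.

Lemma uniq_sorted d : forall mu1 mu2 : 'X_{1..nv}, (mdeg mu1 <= d)%N ->
  sorted mu1 -> sorted mu2 -> E mu1 = E mu2 -> mu1 = mu2.
Proof.
elim: d => [|d IH] mu1 mu2 hd so1 so2 e12.
all: have hV : forall V0, (\sum_(j < nv) mu1 j * (Vof cell (P j) == V0) =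
                    \sum_(j < nv) mu2 j * (Vof cell (P j) == V0))%N
       by move=> V0; rewrite -!cntV e12.
all: have hH : forall H0, (\sum_(j < nv) mu1 j * (Hof cell (P j) == H0) =
                    \sum_(j < nv) mu2 j * (Hof cell (P j) == H0))%N
       by move=> H0; rewrite -!cntH e12.
all: have hW : forall ij, (\sum_(j < nv) mu1 j * inF ij (P j) =
                    \sum_(j < nv) mu2 j * inF ij (P j))%N
       by move=> ij; rewrite -!cntW e12.
all: case: (eqVneq mu1 0%MM) => [z1|nz1]; first by rewrite z1 (zero_other hH z1).
  by move: hd; rewrite leqn0 mdeg_eq0 (negbTE nz1).
case: (eqVneq mu2 0%MM) => [z2|nz2].
  by rewrite z2 (@zero_other mu2 mu1 (fun H0 => esym (hH H0)) z2) in nz1 *; rewrite eqxx in nz1.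
have [j1 [p1 m1]] := exists_lexmin nz1.
have [j2 [p2 m2]] := exists_lexmin nz2.
have X12 : X j1 = X j2.
  apply/eqP; rewrite eqn_leq.
  rewrite (@lexX mu2 mu1 (fun V0 => esym (hV V0)) j2 j1 p2 (conj p1 m1)).
  by rewrite (@lexX mu1 mu2 hV j1 j2 p1 (conj p2 m2)).
have Y12 : Y j1 = Y j2.
  case: (ltngtP (Y j1) (Y j2)) => // lt; exfalso.
    exact: (@lexY_contra mu2 mu1 (fun V0 => esym (hV V0)) (fun H0 => esym (hH H0))
             (fun ij => esym (hW ij)) so2 j2 j1 (conj p2 m2) p1 (esym X12) lt).
  exact: (@lexY_contra mu1 mu2 hV hH hW so1 j1 j2 (conj p1 m1) p2 X12 lt).
have j12 : j1 = j2 by apply: pt_inj.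
subst j2.
have E1 := split_U p1; have E2 := split_U p2.
have e' : E (mu1 - U_(j1))%MM = E (mu2 - U_(j1))%MM.
  apply/mnmP => k; move/mnmP/(_ k): e12; rewrite -(enum_valK k).
  by rewrite {1}E1 {1}E2 !E_addU => /addIn.
have := IH (mu1 - U_(j1))%MM (mu2 - U_(j1))%MM ltac:(move: hd; rewrite {1}E1 mdegD mdeg1; lia)
  (sorted_sub (j:=j1) so1) (sorted_sub (j:=j1) so2) e'.
by move=> h; rewrite E1 E2 h.
Qed.

End Uniq.

Theorem theorem4p4 (K : fieldType) (m n r s : nat)
  (a b : 'I_r -> 'I_s -> (nat * nat)) :
  @is_grid m n r s a b ->
  forall p : @Sring K m n (@grid_cell m n r s a b),
    @polyomino_ideal K m n (@grid_cell m n r s a b) p <->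
    @toric_ideal K m n (@grid_cell m n r s a b) _
      (@grid_inF m n r s a) p.
Proof.
move=> G p; apply: generic_main.
  move=> a' b' c d h1 h2 h3 c1 c2 d1 d2 ij.
  exact: (grid_Hw G h1 h2 h3 c1 c2 d1 d2 ij).
move=> mu1 mu2 so1 so2 e.
exact: (uniq_sorted G (leqnn _) so1 so2 e).
Qed.
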